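(* Let $(p_\lambda(\mathbf y))_{\lambda\in\mathcal P}$ be a full sequence of symmetric functions. Then $(p_\lambda)$ is of binomial type if and only if there exists a quasi-genus $G$ such that $(p_\lambda)$ is associated with $G$.
   Context: **Partitions and the order.** $\mathcal P$ is the set of integer partitions. Partitions of $n$ are totally ordered by Macdonald's reverse lexicographic order: $\lambda>\mu$ iff the first nonzero difference $\lambda_i-\mu_i$ is positive. **Full sequence.** A nonzero homogeneous symmetric function $p$ of degree $n$, written $p=\sum_\lambda c_\lambda m_\lambda$ in monomial symmetric functions, has exact degree equal to the largest $\lambda\vdash n$ with $c_\lambda\ne0$. A full sequence is a family $(p_\lambda(\mathbf y))_{\lambda\in\mathcal P}$ of homogeneous symmetric functions in $\mathbf y=(y_1,y_2,\dots)$ with each $p_\lambda$ of exact degree $\lambda$. **Vector conventions.** For a vector $\alpha$ of nonnegative integers with finite support, $p_\alpha$ (resp. $G_\alpha$) denotes the value at the partition obtained by sorting $\alpha$ into weakly decreasing order. For vectors we write $\alpha!=\prod_i\alpha_i!$ and $|\alpha|=\sum_i\alpha_i$, and $\binom{\lambda}{\alpha}=\frac{\lambda!}{\alpha!(\lambda-\alpha)!}$ for $0\le\alpha\le\lambda$ componentwise. **Binomial type.** $(p_\lambda)$ is of binomial type if, for disjoint variable sets $\mathbf y,\mathbf z$ and every $\lambda$, $$p_\lambda(\mathbf y\cup\mathbf z)=\sum_{\alpha}\binom{\lambda}{\alpha}p_\alpha(\mathbf y)\,p_{\lambda-\alpha}(\mathbf z),$$ where $\alpha$ ranges over vectors with $0\le\alpha\le\lambda$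 (viewing $\lambda=(\lambda_1,\dots,\lambda_{\ell(\lambda)})$). **Quasi-genus.** A quasi-genus is an assignment of a complex number $G_\lambda$ to each partition $\lambda$ (equivalently a functor from set partitions under relabeling to $\mathbb C$, depending only on block type), with $G_\emptyset=1$. **Association.** $(p_\lambda)$ is associated with $G$ (i.e. it enumerates $G$-enriched functions from a set partitioned by type $\lambda$ to $\{y_1,y_2,\dots\}$) if for every $\lambda$ $$p_\lambda(\mathbf y)=\sum\frac{\lambda!}{\prod_j\alpha^{(j)}!}\prod_{j\ge1}G_{\alpha^{(j)}}\,y_j^{|\alpha^{(j)}|}.$$ The sum is over families $(\alpha^{(j)})_{j\ge1}$ of vectors in $\mathbb Z_{\ge0}^{\ell(\lambda)}$, all but finitely many zero, with $\sum_j\alpha^{(j)}=\lambda$. *)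

(* Defs.v *)
From HB Require Import structures.
From mathcomp Require Import all_boot all_order all_algebra.
Set Implicit Arguments. Unset Strict Implicit. Unset Printing Implicit Defensive.
Import Order.TTheory GRing.Theory Num.Theory.

Definition is_partition (l : seq nat) : bool :=
  sorted geq l && all (fun x => 0 < x) l.

Definition ptn (a : seq nat) : seq nat := sort geq [seq x <- a | 0 < x].

(* Macdonald's reverse lexicographic order: revlex_gt l m  iff the first
   nonzero difference l_i - m_i (sequences padded by zeros) is positive. *)
Fixpoint revlex_gt (l m : seq nat) : bool :=
  match l, m with
  | [::], _ => false
  | x :: l', [::] => has (fun y => 0 < y) (x :: l')
  | x :: l', y :: m' => (y < x) || ((x == y) && revlex_gt l' m')
  end.

(* A symmetric function (in y_1, y_2, ...) over F is represented by its
   coefficients in the monomial basis: c mu = coefficient of m_mu, for mu a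
   partition.  Values at non-partitions are irrelevant. *)
Definition symfun (F : Type) := seq nat -> F.

(* Coefficient of the monomial y_1^{b_1} ... y_k^{b_k} (b a finitely
   supported exponent vector) in the symmetric function c. *)
Definition mcoef (F : Type) (c : symfun F) (b : seq nat) : F := c (ptn b).

Section Defs.
Variable F : numClosedFieldType.
Local Open Scope ring_scope.

Definition exact_degree (c : symfun F) (lam : seq nat) : Prop :=
  c lam != 0 /\
  forall mu, is_partition mu -> c mu != 0 ->
    sumn mu = sumn lam /\ ~~ revlex_gt mu lam.

Definition full_sequence (p : seq nat -> symfun F) : Prop :=
  forall lam, is_partition lam -> exact_degree (p lam) lam.

Fixpoint boxes (lam : seq nat) : seq (seq nat) :=
  match lam with
  | [::] => [:: [::]]
  | x :: l => [seq i :: s | i <- iota 0 x.+1, s <- boxes l]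
  end.

Definition vsub (lam a : seq nat) : seq nat := [seq (x.1 - x.2)%N | x <- zip lam a].

Definition vbinom (lam a : seq nat) : nat := (\prod_(x <- zip lam a) 'C(x.1, x.2))%N.

Definition vfact (a : seq nat) : nat := (\prod_(x <- a) x`!)%N.

(* Binomial type, written out on monomial coefficients: the coefficient of
   y^b z^g in p_lam(y u z) is the coefficient of the monomial with exponent
   multiset b ++ g in p_lam, and the coefficient of y^b z^g in
   p_a(y) p_{lam-a}(z) is [y^b]p_a * [z^g]p_{lam-a}. *)
Definition binomial_type (p : seq nat -> symfun F) : Prop :=
  forall lam, is_partition lam ->
  forall b g : seq nat,
    mcoef (p lam) (b ++ g) =
    \sum_(a <- boxes lam)
       (vbinom lam a)%:R * mcoef (p (ptn a)) b * mcoef (p (ptn (vsub lam a))) g.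

(* A quasi-genus: a value G mu for each partition mu, with G [::] = 1.
   G_a for a vector a means G (ptn a). *)
Definition quasi_genus (G : seq nat -> F) : Prop := G [::] = 1.

Fixpoint families (lam : seq nat) (k : nat) : seq (seq (seq nat)) :=
  match k with
  | 0 => [:: [::]]
  | k'.+1 => [seq a :: f | a <- boxes lam, f <- families lam k']
  end.

Definition vsum (n : nat) (f : seq (seq nat)) : seq nat :=
  foldr (fun a acc => [seq (x.1 + x.2)%N | x <- zip a acc]) (nseq n 0) f.

(* Association, written out on monomial coefficients: the coefficient of
   y_1^{b_1} ... y_k^{b_k} in
     sum lam!/prod_j a^(j)! prod_j G_{a^(j)} y_j^{|a^(j)|}
   is the sum over families (a^(1..k)) with sum_j a^(j) = lam and
   |a^(j)| = b_j (all a^(j) with j > k are then 0, contributing factor 1). *)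
Definition associated (p : seq nat -> symfun F) (G : seq nat -> F) : Prop :=
  forall lam, is_partition lam ->
  forall b : seq nat,
    mcoef (p lam) b =
    \sum_(f <- families lam (size b) |
            (vsum (size lam) f == lam) && ([seq sumn a | a <- f] == b))
       ((vfact lam)%:R / (\prod_(a <- f) vfact a)%N%:R *
        \prod_(a <- f) G (ptn a)).

End Defs.

(* Main.v *)
Require Import Defs.
From HB Require Import structures.
From mathcomp Require Import all_boot all_order all_algebra.
From mathcomp Require Import ring zify.
Set Implicit Arguments. Unset Strict Implicit. Unset Printing Implicit Defensive.
Import Order.TTheory GRing.Theory Num.Theory.

Lemma mem_allcons (T : eqType) (A : seq T) (B : seq (seq T)) y z :
  (y :: z \in [seq a :: w | a <- A, w <- B]) = (y \in A) && (z \in B).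
Proof.
apply/allpairsP/andP => [[[a w] [/= ha hw [-> ->]]] //|[ha hw]].
by exists (y, z).
Qed.

Lemma nil_allcons (T : eqType) (A : seq T) (B : seq (seq T)) :
  ([::] \in [seq a :: w | a <- A, w <- B]) = false.
Proof. by apply/allpairsP => -[[a w] [_ _]]. Qed.

Lemma uniq_allcons (T : eqType) (A : seq T) (B : seq (seq T)) :
  uniq A -> uniq B -> uniq [seq a :: w | a <- A, w <- B].
Proof.
move=> uA uB; apply: allpairs_uniq => // -[a w] [a' w'] _ _ /= [-> ->] //.
Qed.

Lemma boxes_cons' x l : boxes (x :: l) = [seq i :: s | i <- iota 0 x.+1, s <- boxes l].
Proof. by []. Qed.

Lemma mem_boxes v s : (s \in boxes v) = all2 leq s v.
Proof.
elim: v s => [|x l IH] [|i s] //.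
- by rewrite boxes_cons' nil_allcons.
- by rewrite boxes_cons' mem_allcons IH mem_iota add0n ltnS.
Qed.

Lemma uniq_boxes v : uniq (boxes v).
Proof. by elim: v => [|x l IH] //; rewrite boxes_cons'; apply: uniq_allcons => //; apply: iota_uniq. Qed.

Lemma families_cons v k :
  families v k.+1 = [seq a :: f | a <- boxes v, f <- families v k].
Proof. by []. Qed.

Lemma mem_families v k f :
  (f \in families v k) = (size f == k) && all (fun a => all2 leq a v) f.
Proof.
elim: k f => [|k IH] [|a f] //.
- by rewrite families_cons nil_allcons.
- by rewrite families_cons mem_allcons IH mem_boxes /= eqSS andbCA.
Qed.

Lemma uniq_families v k : uniq (families v k).
Proof.
elim: k => [|k IH] //; rewrite families_cons.
by apply: uniq_allcons => //; apply: uniq_boxes.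
Qed.

Lemma all2_size (s t : seq nat) : all2 leq s t -> size s = size t.
Proof. by elim: s t => [|x s IH] [|y t] //= /andP[_ /IH ->]. Qed.

Lemma all2_trans (s t u : seq nat) : all2 leq s t -> all2 leq t u -> all2 leq s u.
Proof.
elim: s t u => [|x s IH] [|y t] [|z u] //= /andP[h1 h2] /andP[h3 h4].
by rewrite (leq_trans h1 h3) (IH _ _ h2 h4).
Qed.

Lemma all2_refl (s : seq nat) : all2 leq s s.
Proof. by elim: s => //= x s ->; rewrite leqnn. Qed.

Definition vadd (a s : seq nat) := [seq (x.1 + x.2)%N | x <- zip a s].

Lemma vsum_cons n a f : vsum n (a :: f) = vadd a (vsum n f).
Proof. by []. Qed.

Lemma size_vadd a s : size a = size s -> size (vadd a s) = size a.
Proof. by move=> e; rewrite size_map size_zip e minnn. Qed.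

Lemma size_vsub v a : size a = size v -> size (vsub v a) = size v.
Proof. by move=> e; rewrite size_map size_zip e minnn. Qed.

Lemma size_vsum n f : all (fun a => size a == n) f -> size (vsum n f) = n.
Proof.
elim: f => [|a f IH]; first by rewrite /= size_nseq.
move=> /andP[/eqP ea /IH ef]; rewrite vsum_cons size_vadd ?ea ?ef //.
Qed.

Lemma vadd_le_l a s : size a = size s -> all2 leq a (vadd a s).
Proof. by elim: a s => [|x a IH] [|y s] //= [/IH ->]; rewrite leq_addr. Qed.

Lemma vadd_le_r a s : size a = size s -> all2 leq s (vadd a s).
Proof. by elim: a s => [|x a IH] [|y s] //= [/IH ->]; rewrite leq_addl. Qed.

Lemma vsub_le v a : size a = size v -> all2 leq (vsub v a) v.
Proof. by elim: v a => [|x v IH] [|y a] //= [/IH ->]; rewrite leq_subr. Qed.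

Lemma vsub0 v : vsub v [::] = [::].
Proof. by case: v. Qed.

Lemma vadd_eq a s v : all2 leq a v -> size s = size v ->
  (vadd a s == v) = (s == vsub v a).
Proof.
elim: v a s => [|x v IH] [|y a] [|z s] //= /andP[hy ha] [hs].
rewrite /vadd /= eqseq_cons -/(vadd a s) IH // eqseq_cons.
congr andb; rewrite /=; apply/eqP/eqP; lia.
Qed.

Lemma le_vsum n f c : all (fun a => size a == n) f -> c \in f -> all2 leq c (vsum n f).
Proof.
elim: f => [|a f IH] //; move=> /andP[/eqP ea ef]; rewrite inE => /orP[/eqP ->|cf].
  by rewrite vsum_cons vadd_le_l // size_vsum // ea.
rewrite vsum_cons; apply: all2_trans (IH ef cf) _.
by apply: vadd_le_r; rewrite size_vsum // ea.
Qed.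

Lemma vfact_split v a : all2 leq a v ->
  vfact v = (vbinom v a * vfact a * vfact (vsub v a))%N.
Proof.
elim: v a => [|x v IH] [|y a] //.
  by rewrite /vfact /vbinom /= !big_nil.
move=> /andP[hy ha].
rewrite /vfact /vbinom /= !big_cons -/(vfact v) -/(vfact a) -/(vfact (vsub v a)).
rewrite -/(vbinom v a) (IH _ ha) -(bin_fact hy).
ring.
Qed.

Lemma vfact_gt0 a : (0 < vfact a)%N.
Proof. by rewrite /vfact; apply: prodn_gt0 => i; rewrite fact_gt0. Qed.

Local Open Scope ring_scope.

Definition Bx (F : numClosedFieldType) (v : seq nat) (h : seq nat -> seq nat -> F) : F :=
  \sum_(a <- boxes v) (vbinom v a)%:R * h a (vsub v a).

Lemma Bx_nil (F : numClosedFieldType) (h : seq nat -> seq nat -> F) :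
  Bx [::] h = h [::] [::].
Proof. by rewrite /Bx /= big_cons big_nil /vbinom /= big_nil mul1r addr0. Qed.

Lemma boxes_cons x l : boxes (x :: l) = [seq i :: s | i <- iota 0 x.+1, s <- boxes l].
Proof. by []. Qed.

Lemma Bx_cons (F : numClosedFieldType) x l (h : seq nat -> seq nat -> F) :
  Bx (x :: l) h = \sum_(0 <= i < x.+1) ('C(x, i))%:R *
     Bx l (fun s c => h (i :: s) ((x - i)%N :: c)).
Proof.
rewrite /Bx boxes_cons big_allpairs_dep; apply: eq_bigr => i _.
rewrite big_distrr; apply: eq_bigr => s _.
by rewrite /vbinom /= big_cons natrM mulrA.
Qed.

Lemma Bx_ext (F : numClosedFieldType) v (h h' : seq nat -> seq nat -> F) :
  (forall a c, h a c = h' a c) -> Bx v h = Bx v h'.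
Proof. by move=> e; rewrite /Bx; apply: eq_bigr => a _; rewrite e. Qed.

Lemma Bx_sum (F : numClosedFieldType) (I : Type) (r : seq I) v
  (h : I -> seq nat -> seq nat -> F) :
  Bx v (fun a c => \sum_(i <- r) h i a c) = \sum_(i <- r) Bx v (h i).
Proof.
rewrite /Bx exchange_big /=; apply: eq_bigr => a _; by rewrite big_distrr.
Qed.

Lemma Bx_scal (F : numClosedFieldType) k v (h : seq nat -> seq nat -> F) :
  Bx v (fun a c => k * h a c) = k * Bx v h.
Proof.
rewrite /Bx big_distrr; apply: eq_bigr => a _; by rewrite mulrCA.
Qed.

Lemma binom_assoc x i j : (i + j <= x)%N ->
  ('C(x, i) * 'C(x - i, j) = 'C(x, i + j) * 'C(i + j, i))%N.
Proof.
move=> h.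
have hi : (i <= x)%N by apply: leq_trans h; apply: leq_addr.
have hj : (j <= x - i)%N by rewrite leq_subRL // addnC.
apply/eqP; rewrite -(@eqn_pmul2r (i`! * j`! * (x - i - j)`!)); last by rewrite !muln_gt0 !fact_gt0.
have e1 : ('C(x, i) * 'C(x - i, j) * (i`! * j`! * (x - i - j)`!) = x`!)%N.
  rewrite -(bin_fact hi) -(bin_fact hj).
  ring.
have e2 : ('C(x, i + j) * 'C(i + j, i) * (i`! * j`! * (x - i - j)`!) = x`!)%N.
  rewrite -(bin_fact h) -(bin_fact (leq_addr j i)) addKn subnDA.
  ring.
by rewrite e1 e2.
Qed.

Lemma tri_sum (F : numClosedFieldType) x (W : nat -> nat -> nat -> F) :
  \sum_(0 <= i < x.+1) \sum_(0 <= j < (x - i).+1)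
     ('C(x, i) * 'C(x - i, j))%:R * W i j (x - i - j)%N =
  \sum_(0 <= k < x.+1) \sum_(0 <= m < k.+1)
     ('C(x, k) * 'C(k, m))%:R * W m (k - m)%N (x - k)%N.
Proof.
transitivity (\sum_(0 <= i < x.+1) \sum_(0 <= k < x.+1)
     if (i <= k)%N then ('C(x, k) * 'C(k, i))%:R * W i (k - i)%N (x - k)%N else 0); last first.
  rewrite exchange_big /=.
  rewrite big_nat [RHS]big_nat; apply: eq_bigr => k /andP[_ hk].
  rewrite (big_cat_nat (n := k.+1)) //=.
  rewrite [X in _ + X]big_nat [X in _ + X]big1 ?addr0; last first.
    by move=> i /andP[hi _]; rewrite leqNgt hi.
  by rewrite big_nat [RHS]big_nat; apply: eq_bigr => i /andP[_ hi]; rewrite -ltnS hi.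
rewrite big_nat [RHS]big_nat; apply: eq_bigr => i /andP[_ hi].
symmetry; rewrite (big_cat_nat (n := i)) //=; last by apply: ltnW.
rewrite big_nat big1 ?add0r; last by move=> k /andP[_ hk]; rewrite leqNgt hk.
rewrite -[X in index_iota X _]add0n big_addn subSn // big_nat [RHS]big_nat; apply: eq_bigr => j /andP[_ hj].
rewrite leq_addl addnK addnC binom_assoc ?subnDA //.
by rewrite -leq_subRL // -ltnS.
Qed.

Lemma Bx_assoc (F : numClosedFieldType) v (K : seq nat -> seq nat -> seq nat -> F) :
  Bx v (fun a c => Bx c (fun d e => K a d e)) =
  Bx v (fun a c => Bx a (fun d e => K d e c)).
Proof.
elim: v K => [|x l IH] K; first by rewrite !Bx_nil.
rewrite !Bx_cons.
transitivity (\sum_(0 <= i < x.+1) \sum_(0 <= j < (x - i).+1)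
   ('C(x, i) * 'C(x - i, j))%:R *
   Bx l (fun s c => Bx s (fun d e => K (i :: d) (j :: e) ((x - i - j)%N :: c)))).
  apply: eq_bigr => i _.
  rewrite (@Bx_ext _ _ _ (fun s c => \sum_(0 <= j < (x - i).+1) ('C(x - i, j))%:R *
      Bx c (fun d e => K (i :: s) (j :: d) ((x - i - j)%N :: e)))); last first.
    by move=> s c; rewrite Bx_cons.
  rewrite Bx_sum big_distrr; apply: eq_bigr => j _.
  rewrite Bx_scal (IH (fun a d e => K (i :: a) (j :: d) ((x - i - j)%N :: e))) natrM; exact: mulrA.
rewrite (@tri_sum _ x (fun i j m => Bx l (fun s c => Bx s (fun d e => K (i :: d) (j :: e) (m :: c))))).
apply: eq_bigr => k _.
rewrite (@Bx_ext _ _ _ (fun s c => \sum_(0 <= m < k.+1) ('C(k, m))%:R *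
      Bx s (fun d e => K (m :: d) ((k - m)%N :: e) ((x - k)%N :: c)))); last first.
  by move=> s c; rewrite Bx_cons.
rewrite Bx_sum big_distrr; apply: eq_bigr => m _.
rewrite Bx_scal natrM; symmetry; exact: mulrA.
Qed.

Lemma Bx0 (F : numClosedFieldType) v (h : seq nat -> seq nat -> F) :
  (forall a c, h a c = 0) -> Bx v h = 0.
Proof. by move=> e; rewrite /Bx big1 // => a _; rewrite e mulr0. Qed.

Lemma Bx_zero (F : numClosedFieldType) v (K : seq nat -> F) :
  Bx v (fun a c => (nseq (size a) 0%N == a)%:R * K c) = K v.
Proof.
elim: v K => [|x l IH] K; first by rewrite Bx_nil /= mul1r.
rewrite Bx_cons big_nat_recl // big_nat big1 ?addr0; last first.
  move=> i _; rewrite Bx0 ?mulr0 // => s c /=.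
  by rewrite mul0r.
rewrite bin0 mul1r -[RHS](IH (fun c => K (x :: c))).
by apply: Bx_ext => s c /=; rewrite eqseq_cons eqxx subn0.
Qed.

Definition pos (l : seq nat) := [seq x <- l | (0 < x)%N].

Definition pinv (F : numClosedFieldType) (h : seq nat -> seq nat -> F) :=
  forall a a' c c', perm_eq (pos a) (pos a') -> perm_eq (pos c) (pos c') ->
  h a c = h a' c'.

Lemma perm_pos_cons i s s' : perm_eq (pos s) (pos s') ->
  perm_eq (pos (i :: s)) (pos (i :: s')).
Proof. by rewrite /pos /=; case: ifP => // _; rewrite perm_cons. Qed.

Lemma pinv_cons (F : numClosedFieldType) (h : seq nat -> seq nat -> F) i j :
  pinv h -> pinv (fun s c => h (i :: s) (j :: c)).
Proof. by move=> H a a' c c' pa pc; apply: H; apply: perm_pos_cons. Qed.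

Lemma Bx_pos (F : numClosedFieldType) v (h : seq nat -> seq nat -> F) :
  pinv h -> Bx v h = Bx (pos v) h.
Proof.
elim: v h => [|x l IH] h hh //.
case: x => [|x].
  rewrite /pos /= -/(pos l) -IH // Bx_cons big_nat1 bin0 mul1r.
  by apply: Bx_ext => s c; apply: hh; rewrite /pos /=.
rewrite /pos /= -/(pos l) !Bx_cons; apply: eq_bigr => i _.
by rewrite IH //; apply: pinv_cons.
Qed.

Lemma Bx_swap (F : numClosedFieldType) x y l (h : seq nat -> seq nat -> F) :
  pinv h -> Bx (x :: y :: l) h = Bx (y :: x :: l) h.
Proof.
move=> hh.
have E : forall x y (h : seq nat -> seq nat -> F), Bx (x :: y :: l) h =
   \sum_(0 <= i < x.+1) \sum_(0 <= j < y.+1) ('C(x, i) * 'C(y, j))%:R *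
      Bx l (fun s c => h (i :: j :: s) ((x - i)%N :: (y - j)%N :: c)).
  move=> x' y' h'; rewrite Bx_cons; apply: eq_bigr => i _.
  rewrite Bx_cons big_distrr; apply: eq_bigr => j _.
  by rewrite natrM; exact: mulrA.
rewrite !E exchange_big /=; apply: eq_bigr => j _; apply: eq_bigr => i _.
rewrite mulnC; congr (_ * _); apply: Bx_ext => s c; apply: hh.
  by apply: perm_filter; apply/permPl; exact: (perm_catCA [:: i] [:: j] s).
by apply: perm_filter; apply/permPl; exact: (perm_catCA [:: (x - i)%N] [:: (y - j)%N] c).
Qed.

Lemma Bx_move (F : numClosedFieldType) x l1 l2 (h : seq nat -> seq nat -> F) :
  pinv h -> Bx (x :: l1 ++ l2) h = Bx (l1 ++ x :: l2) h.
Proof.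
elim: l1 h => [|y l1 IH] h hh //.
rewrite !cat_cons Bx_swap // !Bx_cons; apply: eq_bigr => j _.
by rewrite IH //; apply: pinv_cons.
Qed.

Lemma Bx_perm (F : numClosedFieldType) v v' (h : seq nat -> seq nat -> F) :
  pinv h -> perm_eq v v' -> Bx v h = Bx v' h.
Proof.
elim: v v' h => [|x l IH] v' h hh pv.
  by move: pv; rewrite perm_sym => /perm_nilP ->.
have xv : x \in v' by rewrite -(perm_mem pv) mem_head.
move: pv; case/splitPr: xv => l1 l2 pv; rewrite -Bx_move //.
have h1 : perm_eq (l1 ++ x :: l2) (x :: l1 ++ l2).
  by apply/permPl; exact: (perm_catCA l1 [:: x] l2).
have pv' : perm_eq l (l1 ++ l2) by rewrite -(perm_cons x); exact: perm_trans pv h1.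
rewrite !Bx_cons; apply: eq_bigr => i _.
by rewrite (IH (l1 ++ l2)) //; apply: pinv_cons.
Qed.

Definition Ass (F : numClosedFieldType) (G : seq nat -> F) (v b : seq nat) : F :=
    \sum_(f <- families v (size b) |
            (vsum (size v) f == v) && ([seq sumn a | a <- f] == b))
       ((vfact v)%:R / (\prod_(a <- f) vfact a)%N%:R *
        \prod_(a <- f) G (ptn a)).

Lemma vfact_nseq n : vfact (nseq n 0%N) = 1%N.
Proof. by elim: n => [|n IH]; rewrite /vfact ?big_nil // big_cons -/(vfact _) IH. Qed.

Lemma Ass_nil (F : numClosedFieldType) (G : seq nat -> F) v :
  Ass G v [::] = (nseq (size v) 0%N == v)%:R.
Proof.
rewrite /Ass /= big_cons andbT !big_nil.
case: eqP => [<-|_] //.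
by rewrite vfact_nseq divr1 mulr1 addr0.
Qed.

Lemma Ass_cons (F : numClosedFieldType) (G : seq nat -> F) v b1 rest :
  Ass G v (b1 :: rest) =
  Bx v (fun a c => (sumn a == b1)%:R * G (ptn a) * Ass G c rest).
Proof.
rewrite /Ass [size (_ :: _)]/= families_cons big_mkcond big_allpairs_dep /Bx.
apply: eq_big_seq => a; rewrite mem_boxes => ha.
have sa := all2_size ha.
set w := vsub v a.
have sw : size w = size v by rewrite size_vsub.
transitivity (\sum_(f <- families v (size rest))
   if (sumn a == b1) && ((vsum (size v) f == w) && ([seq sumn x | x <- f] == rest)) then
     (vfact v)%:R / (\prod_(x <- a :: f) vfact x)%N%:R * \prod_(x <- a :: f) G (ptn x)
   else 0).
  apply: eq_big_seq => f; rewrite mem_families => /andP[_ hf].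
  have hf' : all (fun a => size a == size v) f.
    by apply/allP => c /(allP hf) /all2_size ->.
  rewrite vsum_cons vadd_eq //; last by rewrite size_vsum.
  by rewrite eqseq_cons andbCA.
case: eqP => hb; last by rewrite /= mulr0n !mul0r mulr0 big1.
rewrite /= mulr1n mul1r -big_mkcond /= -big_filter.
rewrite sw.
rewrite (perm_big [seq f <- families w (size rest) | (vsum (size v) f == w) && ([seq sumn x | x <- f] == rest)])
   /=; last first.
  apply: uniq_perm; rewrite ?filter_uniq ?uniq_families // => f.
  rewrite !mem_filter !mem_families; apply/idP/idP.
  - move=> /and3P[/andP[/eqP hs hr] hsz hall]; rewrite hs eqxx hr hsz /=.
    have hf' : all (fun c => size c == size v) f.
      by apply/allP => c /(allP hall) /all2_size ->.
    by apply/allP => c hc; rewrite -hs; apply: le_vsum.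
  - move=> /and3P[hh hsz hall]; rewrite hh hsz /=.
    by apply/allP => c /(allP hall) hc; apply: all2_trans hc (vsub_le sa).
rewrite big_filter big_distrr big_distrr; apply: eq_bigr => f _.
rewrite !big_cons (vfact_split ha) -/w !natrM.
have h1 : (vfact a)%:R != 0 :> F by rewrite pnatr_eq0 -lt0n vfact_gt0.
have h2 : (\prod_(j <- f) vfact j)%N%:R != 0 :> F.
  by rewrite pnatr_eq0 -lt0n prodn_gt0 // => j; exact: vfact_gt0.
by rewrite /=; field; rewrite h1 h2.
Qed.

Lemma geq_total : total geq.
Proof. by move=> x y; rewrite /geq /= leq_total. Qed.
Lemma geq_trans : transitive geq.
Proof. by move=> y x z /= h1 h2; apply: leq_trans h2 h1. Qed.
Lemma geq_anti : antisymmetric geq.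
Proof. by move=> x y /= h; apply/eqP; rewrite eqn_leq andbC. Qed.

Lemma ptn_perm a a' : perm_eq (pos a) (pos a') -> ptn a = ptn a'.
Proof. by move=> h; apply/(perm_sortP geq_total geq_trans geq_anti). Qed.

Lemma sumn_pos a : sumn (pos a) = sumn a.
Proof. by elim: a => //= x a IH; rewrite /pos /=; case: x => //= x; rewrite -IH. Qed.

Lemma nseq_pos c : (nseq (size c) 0%N == c) = (pos c == [::]).
Proof. by elim: c => //= x c IH; rewrite /pos eqseq_cons /=; case: x. Qed.

Lemma Ass_pinv (F : numClosedFieldType) (G : seq nat -> F) b c c' :
  perm_eq (pos c) (pos c') -> Ass G c b = Ass G c' b.
Proof.
elim: b c c' => [|b1 rest IH] c c' pc.
  rewrite !Ass_nil !nseq_pos -!size_eq0 (perm_size pc) //.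
have hh : pinv (fun a c0 => (sumn a == b1)%:R * G (ptn a) * Ass G c0 rest).
  move=> a a' d d' pa pd.
  by rewrite -sumn_pos (perm_sumn pa) sumn_pos (ptn_perm pa) (IH _ _ pd).
by rewrite !Ass_cons (Bx_pos _ hh) (Bx_perm hh pc) -Bx_pos.
Qed.

Lemma Ass_cat (F : numClosedFieldType) (G : seq nat -> F) b g v :
  Ass G v (b ++ g) = Bx v (fun a c => Ass G a b * Ass G c g).
Proof.
elim: b v => [|b1 b IH] v.
  rewrite /= -[LHS](Bx_zero v (Ass G ^~ g)); apply: Bx_ext => a c.
  by rewrite Ass_nil.
rewrite cat_cons Ass_cons.
rewrite (@Bx_ext _ _ _ (fun a c => Bx c (fun d e =>
     (sumn a == b1)%:R * G (ptn a) * (Ass G d b * Ass G e g)))); last first.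
  by move=> a c; rewrite IH Bx_scal.
rewrite Bx_assoc; apply: Bx_ext => a c.
rewrite Ass_cons mulrC -Bx_scal; apply: Bx_ext => d e.
by rewrite [RHS]mulrC -!mulrA.
Qed.

Lemma ptn_part b : is_partition (ptn b).
Proof.
by rewrite /is_partition /ptn sort_sorted ?all_sort ?filter_all //; exact: geq_total.
Qed.

Lemma sumn_ptn b : sumn (ptn b) = sumn b.
Proof. by rewrite /ptn (perm_sumn (introT permPl (perm_sort geq _))) -/(pos b) sumn_pos. Qed.

Lemma pos_ptn c : perm_eq (pos (ptn c)) (pos c).
Proof.
have -> : pos (ptn c) = ptn c.
  by apply/all_filterP; rewrite /ptn all_sort filter_all.
by rewrite /ptn perm_sort.
Qed.

Lemma part_sum0 lam : is_partition lam -> sumn lam = 0%N -> lam = [::].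
Proof.
case: lam => // x l /andP[_ /= /andP[hx _]] /eqP.
by rewrite addn_eq0 => /andP[/eqP hx0]; rewrite hx0 in hx.
Qed.


Theorem mainTheorem14 (F : numClosedFieldType) (p : seq nat -> symfun F) :
  full_sequence p ->
  (binomial_type p <-> exists G : seq nat -> F, quasi_genus G /\ associated p G).
Proof.
move=> full.
have deg : forall lam b, is_partition lam -> p lam (ptn b) != 0 -> sumn b = sumn lam.
  move=> lam b hl h; have [_ H] := full lam hl.
  by have [<- _] := H _ (ptn_part b) h; rewrite sumn_ptn.
split.
- move=> bt.
  have p00 : p [::] [::] = 1.
    have := bt [::] isT [::] [::].
    rewrite /mcoef /= big_cons big_nil /vbinom /= big_nil mul1r addr0.
    have [hnz _] := full [::] isT.
    have pn : ptn [::] = [::] by [].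
    have sn : sort geq [::] = [::] :> seq nat by [].
    move=> e; rewrite /ptn /vsub /= !sn in e; apply: (mulfI hnz); by rewrite mulr1 -e.
  pose G := (fun mu => p mu (ptn [:: sumn mu])).
  exists G; split; first exact: p00.
  move=> lam hl b; change (mcoef (p lam) b = Ass G lam b).
  elim: b lam hl => [|b1 rest IH] lam hl.
    rewrite Ass_nil /mcoef /=.
    case: lam hl => [|x l] hl; first by rewrite p00.
    have -> : (nseq (size (x :: l)) 0%N == x :: l) = false.
      apply/negbTE; rewrite nseq_pos /pos /=.
      by case/andP: hl => _ /= /andP[->].
    apply/eqP; apply: contraT => h.
    by have := deg _ [::] hl h; move/esym/(part_sum0 hl).
  have := bt lam hl [:: b1] rest; rewrite cat1s => ->.
  rewrite Ass_cons /Bx; apply: eq_bigr => a _.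
  rewrite IH ?ptn_part // (Ass_pinv _ _ (pos_ptn _)).
  suff -> : mcoef (p (ptn a)) [:: b1] = (sumn a == b1)%:R * G (ptn a) by rewrite !mulrA.
  rewrite /mcoef /G sumn_ptn.
  case: eqP => [<-|hb]; first by rewrite mul1r.
  rewrite mul0r; apply/eqP; apply: contraT => h.
  have := deg _ [:: b1] (ptn_part a) h.
  by rewrite /= addn0 sumn_ptn => /esym.
- move=> [G [_ ass]] lam hl b g.
  rewrite [LHS](ass lam hl) -/(Ass G lam _) Ass_cat /Bx; apply: eq_bigr => a _.
  rewrite (ass _ (ptn_part _)) (ass _ (ptn_part _)) -!/(Ass G _ _).
  by rewrite !(Ass_pinv _ _ (pos_ptn _)) mulrA.
Qed.
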